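(* There exist an environment $E$ and a total preorder $\succeq$ on $\Pi^E$ such that $\succeq\in\mathrm{Ord}_{\mathrm{LAR}}(E)\cap\mathrm{Ord}_{\mathrm{LTL}}(E)$ but $\succeq\notin\mathrm{Ord}_{\mathrm{RM}}(E)\cup\mathrm{Ord}_{\mathrm{MR}}(E)$.
   Context: An environment is a tuple $E=(\mathcal S,\mathcal A,\mathcal T,\mathcal I)$ where $\mathcal S,\mathcal A$ are finite nonempty sets, $\mathcal T:\mathcal S\times\mathcal A\to\Delta(\mathcal S)$ and $\mathcal I\in\Delta(\mathcal S)$. A policy is a map $\pi:\mathcal S\to\Delta(\mathcal A)$ (stationary, possibly stochastic); $\Pi^E$ denotes the set of all policies. A trajectory $\xi=(s_0,a_0,s_1,a_1,\dots)\in\Xi:=\mathcal S\times(\mathcal A\times\mathcal S)^\omega$ is generated under $\pi$ by $s_0\sim\mathcal I$, $a_t\sim\pi(s_t)$, $s_{t+1}\sim\mathcal T(s_t,a_t)$; $\mathbb E^\pi_\xi$ denotes expectation under this distribution. An objective-specification formalism $X$ assigns to each environment $E$ a set of objective specifications, each inducing a total preorder $\succeq$ on $\Pi^E$; $\mathrm{Ord}_X(E)$ is the set of total preorders so induced. A specification defining a scalar $J:\Pi^E\to\mathbb R$ induces $\pi_1\succeq\pi_2\iff J(\pi_1)\ge J(\pi_2)$. MR: specification $(\mathcal R,\gamma)$, $\mathcal R:\mathcal S\times\mathcal A\times\mathcal S\to\mathbb R$, $\gamma\in[0,1)$, $J(\pi)=\mathbb E^\pi_\xi[\sum_{t=0}^\infty\gamma^t\mathcal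 R(s_t,a_t,s_{t+1})]$. LAR: specification $(\mathcal R)$, $\mathcal R:\mathcal S\times\mathcal A\times\mathcal S\to\mathbb R$, $J(\pi)=\lim_{N\to\infty}\frac1N\mathbb E^\pi_\xi[\sum_{t=0}^{N-1}\mathcal R(s_t,a_t,s_{t+1})]$. LTL: specification $(\varphi)$ with $\varphi$ a linear temporal logic formula whose atomic propositions are the transitions $(s,a,s')\in\mathcal S\times\mathcal A\times\mathcal S$, built with $\neg,\lor,\land,\to$ and the temporal operators $\bigcirc$ (next), $\square$ (always), $\lozenge$ (eventually), $\mathcal U$ (until). Semantics on a trajectory $\xi$ at time $t$: an atomic proposition $(s,a,s')$ holds iff $(s_t,a_t,s_{t+1})=(s,a,s')$; $\bigcirc\psi$ holds iff $\psi$ holds at $t+1$; $\square\psi$ iff $\psi$ holds at every $t'\ge t$; $\lozenge\psi$ iff $\psi$ holds at some $t'\ge t$; $\psi\,\mathcal U\,\chi$ iff there is $t'\ge t$ with $\chi$ holding at $t'$ and $\psi$ holding at every $t''$ with $t\le t''<t'$; Boolean connectives as usual. $\varphi(\xi)=1$ if $\varphi$ holds at time $0$ and $0$ otherwise; $J(\pi)=\mathbb E^\pi_\xi[\varphi(\xi)]$. RM (reward machines): specification $(U,u_0,\delta_U,\delta_{\mathcal R},\gamma)$ with $U$ a finite set, $u_0\in U$, $\delta_U:U\times\mathcal S\times\mathcal A\times\mathcal S\to U$, $\delta_{\mathcal R}:U\times U\to(\mathcal S\times\mathcal A\times\mathcal S\to\mathbb R)$, $\gamma\in[0,1)$; along a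 trajectory $u_{t+1}=\delta_U(u_t,s_t,a_t,s_{t+1})$ and $J(\pi)=\mathbb E^\pi_\xi[\sum_{t=0}^\infty\gamma^t\,\delta_{\mathcal R}(u_t,u_{t+1})(s_t,a_t,s_{t+1})]$. *)

(* Defs.v *)
From HB Require Import structures.
From mathcomp Require Import all_boot all_order all_algebra.
From mathcomp Require Import all_classical all_reals all_analysis.
Set Implicit Arguments. Unset Strict Implicit. Unset Printing Implicit Defensive.
Import Order.TTheory GRing.Theory Num.Theory.
Import numFieldNormedType.Exports.
Local Open Scope classical_set_scope.
Local Open Scope ring_scope.

Section Defs.
Variable R : realType.

Definition is_dist (T : finType) (p : T -> R) : Prop :=
  (forall x, 0 <= p x) /\ \sum_(x : T) p x = 1.

Record env := Env {
  st : finType;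
  act : finType;
  st_nonempty : (0 < #|{: st}|)%N;
  act_nonempty : (0 < #|{: act}|)%N;
  trans : st -> act -> st -> R;
  init : st -> R;
  trans_dist : forall s a, is_dist (trans s a);
  init_dist : is_dist init }.

Variable E : env.
Notation S := (st E).
Notation A := (act E).

Definition policy := {pol : S -> A -> R | forall s, is_dist (pol s)}.

Definition traj := nat -> S * A.

(* probability that the first n pairs (s_i,a_i), i < n, equal p 0, ..., p (n-1) *)
Definition prefP (pol : policy) (n : nat) (p : nat -> S * A) : R :=
  if n is n'.+1 then
    init (p 0%N).1 * (\prod_(i < n) sval pol (p i).1 (p i).2)
      * (\prod_(i < n') trans (p i).1 (p i).2 (p i.+1).1)
  else 1.

Definition tup_fun (n : nat) (t : n.+1.-tuple (S * A)) : traj :=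
  fun i => nth (thead t) t i.

(* E^pol[g(xi)] for g depending only on the first n+1 pairs (s_i,a_i), i <= n *)
Definition expn (pol : policy) (n : nat) (g : traj -> R) : R :=
  \sum_(t : n.+1.-tuple (S * A)) prefP pol n.+1 (tup_fun t) * g (tup_fun t).

Definition rew (Rw : S -> A -> S -> R) (xi : traj) (t : nat) : R :=
  Rw (xi t).1 (xi t).2 (xi t.+1).1.

(* MR: J(pol) = E[sum_t gamma^t R(s_t,a_t,s_{t+1})]
   = lim_N E[sum_{t<N} gamma^t R(...)]  (bounded convergence) *)
Definition J_MR (Rw : S -> A -> S -> R) (gamma : R) (pol : policy) : R :=
  limn (fun N => expn pol N (fun xi => \sum_(t < N) gamma ^+ t * rew Rw xi t)).

Definition J_LAR (Rw : S -> A -> S -> R) (pol : policy) : R :=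
  limn (fun N => N%:R^-1 * expn pol N (fun xi => \sum_(t < N) rew Rw xi t)).

Fixpoint rm_state (U : finType) (u0 : U) (dU : U -> S -> A -> S -> U)
    (xi : traj) (t : nat) : U :=
  if t is t'.+1 then dU (rm_state u0 dU xi t') (xi t').1 (xi t').2 (xi t).1
  else u0.

Definition J_RM (U : finType) (u0 : U) (dU : U -> S -> A -> S -> U)
    (dR : U -> U -> S -> A -> S -> R) (gamma : R) (pol : policy) : R :=
  limn (fun N => expn pol N (fun xi =>
     \sum_(t < N) gamma ^+ t *
        rew (dR (rm_state u0 dU xi t) (rm_state u0 dU xi t.+1)) xi t)).

Inductive ltl :=
| LAtom of S & A & S
| LNot of ltl
| LOr of ltl & ltl
| LAnd of ltl & ltl
| LImp of ltl & ltl
| LNext of ltl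
| LAlways of ltl
| LEventually of ltl
| LUntil of ltl & ltl.

Fixpoint holds (phi : ltl) (xi : traj) (t : nat) : Prop :=
  match phi with
  | LAtom s a s' => (xi t).1 = s /\ (xi t).2 = a /\ (xi t.+1).1 = s'
  | LNot p => ~ holds p xi t
  | LOr p q => holds p xi t \/ holds q xi t
  | LAnd p q => holds p xi t /\ holds q xi t
  | LImp p q => holds p xi t -> holds q xi t
  | LNext p => holds p xi t.+1
  | LAlways p => forall t', (t <= t')%N -> holds p xi t'
  | LEventually p => exists2 t', (t <= t')%N & holds p xi t'
  | LUntil p q => exists2 t', (t <= t')%N &
        (holds q xi t' /\ forall t'', (t <= t'')%N -> (t'' < t')%N -> holds p xi t'')
  end.

(* Trajectory law P^pol: cylinder sets [xi | xi 0 = p 0, ..., xi n = p n]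
   have probability prefP pol n.+1 p; P^pol of a set X is its Caratheodory outer
   measure, i.e. the infimum of the total probability of countable covers of X
   by cylinders (None = empty set).  On measurable sets (in particular on LTL
   events) this is the measure of X under the trajectory distribution. *)
Definition cyl (c : option {n : nat & n.+1.-tuple (S * A)}) : set traj :=
  if c is Some (existT n p) then [set xi | forall i, (i <= n)%N -> xi i = tup_fun p i]
  else set0.

Definition cylP (pol : policy) (c : option {n : nat & n.+1.-tuple (S * A)}) : R :=
  if c is Some (existT n p) then prefP pol n.+1 (tup_fun p) else 0.

Definition trajP (pol : policy) (X : set traj) : \bar R :=
  ereal_inf [set (\sum_(0 <= k <oo) (cylP pol (C k))%:E)%E |
             C in [set C : nat -> option {n : nat & n.+1.-tuple (S * A)} |
                   X `<=` \bigcup_k cyl (C k)]].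

Definition J_LTL (phi : ltl) (pol : policy) : R :=
  fine (trajP pol [set xi | holds phi xi 0]).

Definition induced (J : policy -> R) (ord : policy -> policy -> Prop) : Prop :=
  forall p q, ord p q <-> J q <= J p.

Definition total_preorder (ord : policy -> policy -> Prop) : Prop :=
  (forall p q r, ord p q -> ord q r -> ord p r) /\ (forall p q, ord p q \/ ord q p).

Definition in_Ord_MR (ord : policy -> policy -> Prop) : Prop :=
  exists (Rw : S -> A -> S -> R) (gamma : R),
    0 <= gamma < 1 /\ induced (J_MR Rw gamma) ord.

Definition in_Ord_LAR (ord : policy -> policy -> Prop) : Prop :=
  exists Rw : S -> A -> S -> R, induced (J_LAR Rw) ord.

Definition in_Ord_LTL (ord : policy -> policy -> Prop) : Prop :=
  exists phi : ltl, induced (J_LTL phi) ord.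

Definition in_Ord_RM (ord : policy -> policy -> Prop) : Prop :=
  exists (U : finType) (u0 : U) (dU : U -> S -> A -> S -> U)
         (dR : U -> U -> S -> A -> S -> R) (gamma : R),
    0 <= gamma < 1 /\ induced (J_RM u0 dU dR gamma) ord.

End Defs.

(* Main.v *)
Require Import Defs.
From HB Require Import structures.
From mathcomp Require Import all_boot all_order all_algebra.
From mathcomp Require Import all_classical all_reals all_analysis.
From mathcomp Require Import ring lra.
Set Implicit Arguments. Unset Strict Implicit. Unset Printing Implicit Defensive.
Import Order.TTheory GRing.Theory Num.Theory.
Import numFieldNormedType.Exports.
Local Open Scope classical_set_scope.
Local Open Scope ring_scope.

Section Gen.
Variable R : realType.
Variable E : env R.
Local Notation S := (st E).
Local Notation A := (act E).
Local Notation EX := (@Defs.expn R E).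
Local Notation TR := (@trans R E).
Local Notation IN := (@init R E).

Definition dep (n : nat) (g : traj E -> R) :=
  forall xi xi', (forall i, (i <= n)%N -> xi i = xi' i) -> g xi = g xi'.
Definition ext (xi : traj E) n (x : S * A) : traj E :=
  fun i => if (i <= n)%N then xi i else x.

Lemma dep_mono n m g : dep n g -> (n <= m)%N -> dep m g.
Proof. move=> dg nm xi xi' H; apply: dg => i hi; apply: H; exact: leq_trans nm. Qed.

Lemma pol_ge0 (pol : policy E) s a : 0 <= sval pol s a.
Proof. exact: (proj1 (svalP pol s) a). Qed.
Lemma pol_sum (pol : policy E) s : \sum_a sval pol s a = 1.
Proof. exact: (proj2 (svalP pol s)). Qed.
Lemma tr_ge0 s a s' : 0 <= TR s a s'.
Proof. exact: (proj1 (@trans_dist R E s a) s'). Qed.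
Lemma tr_sum s a : \sum_s' TR s a s' = 1.
Proof. exact: (proj2 (@trans_dist R E s a)). Qed.
Lemma in_ge0 s : 0 <= IN s.
Proof. exact: (proj1 (@init_dist R E) s). Qed.
Lemma in_sum : \sum_s IN s = 1.
Proof. exact: (proj2 (@init_dist R E)). Qed.

Lemma sum_tuple_rcons n (F : n.+2.-tuple (S*A) -> R) :
  \sum_(u : n.+2.-tuple (S*A)) F u =
  \sum_(t : n.+1.-tuple (S*A)) \sum_(x : S*A) F [tuple of rcons t x].
Proof.
rewrite pair_bigA /=.
rewrite (reindex (fun p : n.+1.-tuple (S*A) * (S*A) => [tuple of rcons p.1 p.2])) //=.
exists (fun u : n.+2.-tuple (S*A) =>
   ([tuple of belast (thead u) (behead u)], last (thead u) (behead u))).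
  move=> [t x] _ /=; congr pair; last first.
    by rewrite (tuple_eta t) /= last_rcons.
  apply: val_inj => /=; rewrite (tuple_eta t) /= belast_rcons //.
move=> u _; apply: val_inj => /=; rewrite -lastI.
by rewrite [in RHS](tuple_eta u).
Qed.

Lemma tupfun_rcons_le n (t : n.+1.-tuple (S*A)) x i : (i <= n)%N ->
  tup_fun [tuple of rcons t x] i = tup_fun t i.
Proof.
move=> hi; rewrite /tup_fun /= nth_rcons size_tuple ltnS hi.
by apply: set_nth_default; rewrite size_tuple ltnS.
Qed.

Lemma tupfun_rcons_last n (t : n.+1.-tuple (S*A)) x :
  tup_fun [tuple of rcons t x] n.+1 = x.
Proof. by rewrite /tup_fun /= nth_rcons size_tuple ltnn eqxx. Qed.

Lemma prefP_rcons (pol : policy E) n (t : n.+1.-tuple (S*A)) x :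
  prefP pol n.+2 (tup_fun [tuple of rcons t x]) =
  prefP pol n.+1 (tup_fun t) *
    (sval pol x.1 x.2 * TR (tup_fun t n).1 (tup_fun t n).2 x.1).
Proof.
rewrite /prefP big_ord_recr [X in _ * X]big_ord_recr /=.
rewrite tupfun_rcons_le // tupfun_rcons_last tupfun_rcons_le //.
rewrite (eq_bigr (fun i : 'I_n.+1 => sval pol (tup_fun t i).1 (tup_fun t i).2)); last first.
  by move=> i _; rewrite /= tupfun_rcons_le // -ltnS.
rewrite (eq_bigr (fun i : 'I_n => TR (tup_fun t i).1 (tup_fun t i).2 (tup_fun t i.+1).1)); last first.
  by move=> i _; rewrite /= !tupfun_rcons_le // ltnW.
ring.
Qed.

Lemma exq_step (pol : policy E) n g : dep n.+1 g ->
  EX pol n.+1 g = EX pol n (fun xi => \sum_(x : S*A)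
     sval pol x.1 x.2 * TR (xi n).1 (xi n).2 x.1 * g (ext xi n x)).
Proof.
move=> dg; rewrite /Defs.expn sum_tuple_rcons; apply: eq_bigr => t _.
rewrite big_distrr; apply: eq_bigr => x _.
rewrite prefP_rcons -mulrA; congr (_ * _); congr (_ * _); apply: dg => i.
 rewrite /ext; case: (leqP i n) => [hi _|hi hi2].
  by rewrite tupfun_rcons_le.
have -> : i = n.+1 by apply/eqP; rewrite eqn_leq hi2 hi.
exact: tupfun_rcons_last.
Qed.

Lemma exq_base (pol : policy E) g :
  EX pol 0 g = \sum_(x : S*A) IN x.1 * sval pol x.1 x.2 * g (fun _ => x).
Proof.
rewrite /Defs.expn (reindex (fun x : S*A => [tuple x])) /=; last first.
  exists (fun u : 1.-tuple (S*A) => thead u) => // u _.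
  apply: val_inj; rewrite /= [in RHS](tuple_eta u) /=.
  by case: u => -[|a [|b l]].
apply: eq_bigr => x _.
have -> : tup_fun [tuple x] = fun _ => x.
  by apply/funext => -[|i] //=; rewrite /tup_fun /= nth_nil.
by rewrite /prefP big_ord1 big_ord0 mulr1.
Qed.

Lemma exq_congr (pol : policy E) n f g : (forall xi, f xi = g xi) ->
  EX pol n f = EX pol n g.
Proof. by move=> h; congr Defs.expn; apply/funext. Qed.

Lemma exq_add (pol : policy E) n f g :
  EX pol n (fun xi => f xi + g xi) = EX pol n f + EX pol n g.
Proof. by rewrite /Defs.expn -big_split; apply: eq_bigr => t _; rewrite mulrDr. Qed.

Lemma exq_scal (pol : policy E) n c f :
  EX pol n (fun xi => c * f xi) = c * EX pol n f.
Proof. by rewrite /Defs.expn mulr_sumr; apply: eq_bigr => t _; rewrite mulrCA. Qed.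

Lemma exq_sub (pol : policy E) n f g :
  EX pol n (fun xi => f xi - g xi) = EX pol n f - EX pol n g.
Proof.
by rewrite /Defs.expn -sumrB; apply: eq_bigr => t _; rewrite mulrBr.
Qed.

Lemma exq_sum (pol : policy E) n k (F : nat -> traj E -> R) :
  EX pol n (fun xi => \sum_(i < k) F i xi) = \sum_(i < k) EX pol n (F i).
Proof.
rewrite /Defs.expn exchange_big /=; apply: eq_bigr => t _.
by rewrite mulr_sumr.
Qed.

Lemma prefP_ge0 (pol : policy E) n p : 0 <= prefP pol n p.
Proof.
case: n => [|n] //=; rewrite ?mulr_ge0 ?in_ge0 //; apply: prodr_ge0 => i _.
  exact: pol_ge0.
exact: tr_ge0.
Qed.

Lemma weight_sum (pol : policy E) s a :
  \sum_(x : S*A) sval pol x.1 x.2 * TR s a x.1 = 1.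
Proof.
rewrite -(pair_bigA _ (fun s' a' => sval pol s' a' * TR s a s')) /=.
rewrite -[RHS](tr_sum s a); apply: eq_bigr => s' _.
by rewrite -mulr_suml pol_sum mul1r.
Qed.

Lemma exq_marg (pol : policy E) n g : dep n g -> EX pol n.+1 g = EX pol n g.
Proof.
move=> dg; rewrite exq_step; last exact: dep_mono dg _.
apply: exq_congr => xi.
rewrite (eq_bigr (fun x => sval pol x.1 x.2 * TR (xi n).1 (xi n).2 x.1 * g xi)).
  by rewrite -big_distrl /= weight_sum; ring.
move=> x _; congr (_ * _); apply: dg => i hi; by rewrite /ext hi.
Qed.

Lemma exq_marg_le (pol : policy E) n m g : dep n g -> (n <= m)%N ->
  EX pol m g = EX pol n g.
Proof.
move=> dg /subnK <-; elim: (m - n)%N => [|k IH] //.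
rewrite addSn exq_marg //; exact: dep_mono dg (leq_addl _ _).
Qed.

Lemma exq_one (pol : policy E) n : EX pol n (fun _ => 1) = 1.
Proof.
rewrite (@exq_marg_le pol 0 n) // exq_base.
under eq_bigr do rewrite mulr1.
rewrite -(pair_bigA _ (fun s a => IN s * sval pol s a)) /=.
under eq_bigr do rewrite -mulr_sumr pol_sum mulr1.
exact: in_sum.
Qed.

Lemma exq_bound (pol : policy E) n g B : (forall xi, `|g xi| <= B) ->
  `|EX pol n g| <= B.
Proof.
move=> hB; rewrite /Defs.expn.
apply: le_trans (ler_norm_sum _ _ _) _.
have -> : B = \sum_(t : n.+1.-tuple (S*A)) prefP pol n.+1 (tup_fun t) * B.
  by rewrite -mulr_suml -[LHS]mul1r -(exq_one pol n) /Defs.expn;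
     congr (_ * _); apply: eq_bigr => t _; rewrite mulr1.
apply: ler_sum => t _; rewrite normrM ger0_norm ?prefP_ge0 //.
by apply: ler_wpM2l; [exact: prefP_ge0| exact: hB].
Qed.

End Gen.


Lemma pow_small (R : realType) (x e : R) : 0 <= x < 1 -> 0 < e ->
  exists N, forall n, (N <= n)%N -> x ^+ n < e.
Proof.
move=> /andP[x0 x1] e0.
have hx : `|x| < 1 by rewrite ger0_norm.
have [N _ HN] := cvgr0_norm_lt _ (cvg_expr hx) _ e0.
exists N => n hn; have := HN n hn; rewrite /= ger0_norm //; exact: exprn_ge0.
Qed.

Section Conv.
Variable R : realType.
Variable E : env R.
Local Notation S := (st E).
Local Notation A := (act E).
Local Notation EX := (@Defs.expn R E).
Variable r : nat -> traj E -> R.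
Variables (g M0 : R).
Hypothesis g0 : 0 <= g.
Hypothesis g1 : g < 1.
Hypothesis M00 : 0 < M0.
Hypothesis hr : forall t xi, `|r t xi| <= M0 * g ^+ t.
Hypothesis hdep : forall t, dep t.+1 (r t).

Definition GG N xi := \sum_(t < N) r t xi.
Definition aa (pol : policy E) N := EX pol N (GG N).

Lemma geo_sum N k : (1 - g) * \sum_(t < k) g ^+ (N + t) = g ^+ N - g ^+ (N + k).
Proof.
elim: k => [|k IH]; first by rewrite big_ord0 addn0 mulr0 subrr.
rewrite big_ord_recr /= mulrDr IH addnS exprS; ring.
Qed.

Lemma GG_diff N k xi : `|GG (N + k) xi - GG N xi| <= M0 * g ^+ N / (1 - g).
Proof.
rewrite /GG big_split_ord /= addrAC subrr add0r.
apply: le_trans (ler_norm_sum _ _ _) _.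
apply: (@le_trans _ _ (M0 * \sum_(i < k) g ^+ (N + i))).
  by rewrite mulr_sumr; apply: ler_sum => i _; exact: hr.
rewrite -mulrA; apply: ler_wpM2l; first exact: ltW.
rewrite ler_pdivlMr ?subr_gt0 // mulrC geo_sum.
by rewrite lerBlDr lerDl exprn_ge0.
Qed.

Lemma GG_bound N xi : `|GG N xi| <= M0 / (1 - g).
Proof.
have := GG_diff 0 N xi; rewrite add0n expr0 mulr1 {2}/GG big_ord0 subr0 //.
Qed.

Lemma dep_GG N : dep N (GG N).
Proof.
move=> xi xi' H; rewrite /GG; apply: eq_bigr => t _; apply: hdep => i hi.
apply: H; exact: leq_trans hi (ltn_ord t).
Qed.

Lemma aa_diff (pol : policy E) N k :
  `|aa pol (N + k) - aa pol N| <= M0 * g ^+ N / (1 - g).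
Proof.
rewrite /aa -(@exq_marg_le R E pol N (N + k) (GG N)) ?leq_addr //; last exact: (@dep_GG N).
rewrite -exq_sub.
apply: exq_bound => xi; exact: GG_diff.
Qed.

Lemma aa_cvg (pol : policy E) : cvgn (aa pol).
Proof.
apply/cauchy_cvgP/cauchyP => e e0.
have [N HN] : exists N, M0 * g ^+ N / (1 - g) < e.
  have hg : 0 <= g < 1 by rewrite g0 g1.
  have hp : 0 < e * (1 - g) / M0 by rewrite divr_gt0 // mulr_gt0 // subr_gt0.
  have [N HN] := pow_small hg hp.
  exists N; have := HN N (leqnn N).
  by rewrite ltr_pdivlMr // ltr_pdivrMr ?subr_gt0 // mulrC.
exists (aa pol N); exists N => // n /= hn.
rewrite -ball_normE /= -(subnKC hn).
by apply: le_lt_trans HN; rewrite distrC; exact: aa_diff.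
Qed.

Lemma aa_lim (pol : policy E) N :
  `|limn (aa pol) - aa pol N| <= M0 * g ^+ N / (1 - g).
Proof.
rewrite ler_norml; apply/andP; split.
  rewrite lerBrDr; apply: limr_ge; first exact: aa_cvg.
  exists N => // n /= hn; rewrite -(subnKC hn).
  have := aa_diff pol N (n - N); rewrite ler_norml => /andP[h _]; lra.
rewrite lerBlDr; apply: limr_le; first exact: aa_cvg.
exists N => // n /= hn; rewrite -(subnKC hn).
have := aa_diff pol N (n - N); rewrite ler_norml => /andP[_ h]; lra.
Qed.

End Conv.


Section EnvB.
Variable R : realType.

Definition trB (s a s' : bool) : R := ((s || a) == s')%:R.
Definition inB (s : bool) : R := (~~ s)%:R.

Lemma trB_dist s a : is_dist (trB s a).
Proof.
split; first by move=> s'; exact: ler0n.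
by rewrite big_bool /trB; case: s; case: a; rewrite /= ?addr0 ?add0r.
Qed.

Lemma inB_dist : is_dist inB.
Proof.
split; first by move=> s'; exact: ler0n.
by rewrite big_bool /inB /= add0r.
Qed.

Lemma card_bool_gt0 : (0 < #|{: bool}|)%N.
Proof. by rewrite card_bool. Qed.

Definition EB : env R := Env card_bool_gt0 card_bool_gt0 trB_dist inB_dist.

Lemma trEB : @trans R EB = trB. Proof. by []. Qed.
Lemma inEB : @init R EB = inB. Proof. by []. Qed.

Local Notation EX := (@Defs.expn R EB).

Definition beta (pol : policy EB) : R := sval pol false false.

Lemma beta_ge0 pol : 0 <= beta pol.
Proof. exact: (@pol_ge0 R EB pol false false). Qed.
Lemma beta_le1 pol : beta pol <= 1.
Proof.
rewrite /beta -(pol_sum pol false) big_bool /=.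
have := @pol_ge0 R EB pol false true; lra.
Qed.

Definition Rw (s a _ : bool) : R := (~~ s && ~~ a)%:R.

Definition ff (t : nat) (xi : traj EB) : R := @rew R EB Rw xi t.

Lemma sum_bb (F : bool * bool -> R) :
  \sum_(x : bool * bool) F x = F (true, true) + F (true, false) + F (false, true) + F (false, false).
Proof.
rewrite (eq_bigr (fun p => F (p.1, p.2))); last by case.
rewrite -(pair_bigA _ (fun a b => F (a, b))) /= !big_bool /=; ring.
Qed.

Lemma q_val pol t : EX pol t (ff t) = beta pol ^+ t.+1.
Proof.
elim: t => [|t IH].
  rewrite exq_base sum_bb inEB /inB /ff /rew /Rw /= /beta; ring.
rewrite exq_step; last first.
  by move=> xi xi' H; rewrite /ff /rew /Rw (H t.+1).
rewrite (@exq_congr R EB pol t _ (fun xi => beta pol * ff t xi)).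
  by rewrite exq_scal IH [RHS]exprS.
move=> xi; rewrite sum_bb /ff /rew /Rw /ext /= ltnn /trB /beta.
case: (xi t).1; case: (xi t).2 => /=; rewrite ?mulr1n ?mulr0n; ring.
Qed.


Lemma dep_ff t : dep t (ff t).
Proof. by move=> xi xi' H; rewrite /ff /rew /Rw (H t). Qed.

Lemma lar_seq pol N :
  EX pol N (fun xi => \sum_(t < N) @rew R EB Rw xi t) = \sum_(t < N) beta pol ^+ t.+1.
Proof.
rewrite (@exq_sum R EB pol N N ff); apply: eq_bigr => t _.
rewrite (@exq_marg_le R EB pol t N (ff t)) ?q_val //.
  exact: (@dep_ff t).
exact: ltnW (ltn_ord t).
Qed.

Lemma geo1 (b : R) N : (1 - b) * \sum_(t < N) b ^+ t.+1 = b - b ^+ N.+1.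
Proof.
elim: N => [|N IH]; first by rewrite big_ord0 mulr0 expr1 subrr.
rewrite big_ord_recr /= mulrDr IH [b ^+ N.+2]exprS; ring.
Qed.

Lemma J_LAR_val (pol : policy EB) : @J_LAR R EB Rw pol = if beta pol == 1 then 1 else 0.
Proof.
rewrite /J_LAR.
have -> : (fun N => N%:R^-1 * EX pol N (fun xi => \sum_(t < N) @rew R EB Rw xi t))
   = (fun N => N%:R^-1 * \sum_(t < N) beta pol ^+ t.+1).
  by apply/funext => N; rewrite lar_seq.
case: eqP => hb.
  rewrite hb; apply: cvg_lim => //; apply/cvgrPdist_lt => e e0.
  exists 1%N => // N /= hN.
  rewrite (eq_bigr (fun _ => 1)); last by move=> i _; rewrite expr1n.
  rewrite sumr_const card_ord mulVf ?subrr ?normr0 // pnatr_eq0 -lt0n //.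
have hb1 : beta pol < 1 by rewrite lt_neqAle beta_le1 andbT; apply/eqP.
have hb0 := beta_ge0 pol.
set K := 1 / (1 - beta pol).
have hK : 0 < K by rewrite divr_gt0 // subr_gt0.
have hS N : 0 <= \sum_(t < N) beta pol ^+ t.+1 <= K.
  rewrite sumr_ge0 /=; last by move=> i _; exact: exprn_ge0.
  rewrite /K ler_pdivlMr ?subr_gt0 // mulrC geo1.
  have := exprn_ge0 N.+1 hb0; lra.
apply: cvg_lim => //; apply/cvgrPdist_lt => e e0.
exists (Num.truncn (K / e)).+1 => // N /= hN.
have hN0 : (0 < N)%N by apply: leq_trans hN.
have hNr : 0 < N%:R :> R by rewrite ltr0n.
have /andP[h1 h2] := hS N.
rewrite sub0r normrN ger0_norm ?mulr_ge0 ?invr_ge0 ?ler0n //.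
apply: (@le_lt_trans _ _ (N%:R^-1 * K)); first by apply: ler_wpM2l; rewrite ?invr_ge0 ?ler0n.
rewrite mulrC ltr_pdivrMr // -ltr_pdivrMl // mulrC.
apply: lt_le_trans (truncnS_gt _) _; rewrite ler_nat //.
Qed.


Definition phi : ltl EB := LAlways (@LAtom R EB false false false).
Definition XX : set (traj EB) := [set xi | holds phi xi 0].

Lemma tf_nseq n : @tup_fun R EB n (nseq_tuple n.+1 ((false, false) : bool * bool)) = fun _ => (false, false).
Proof. by apply/funext => i; rewrite /tup_fun nth_nseq; case: ifP. Qed.

Lemma cylP_ge0 (pol : policy EB) c : 0 <= cylP pol c.
Proof. case: c => [[m p]|]; last exact: lexx. exact: (@prefP_ge0 R EB). Qed.

Lemma trajP_ub (pol : policy EB) n : (trajP pol XX <= (beta pol ^+ n.+1)%:E)%E.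
Proof.
apply: ereal_inf_lbound.
exists (fun k => if k == 0%N then Some (existT _ n (nseq_tuple n.+1 ((false, false) : bool * bool))) else None).
  move=> xi /= H; exists 0%N => //= i hi; rewrite tf_nseq.
  have [h1 [h2 _]] := H i (leq0n i).
  by move: h1 h2; case: (xi i) => /= a b -> ->.
apply: lim_near_cst => //; exists 1%N => // -[|m] //= _.
rewrite big_nat_recl // big1 ?adde0 //=.
rewrite tf_nseq /prefP /= !prodr_const !card_ord expr1n /inB /= /beta.
by rewrite mul1r mulr1.
Qed.

Lemma trajP_ge0 (pol : policy EB) : (0 <= trajP pol XX)%E.
Proof.
apply: le_ereal_inf_tmp => y [C _ <-].
by apply: nneseries_ge0 => k _ _; rewrite lee_fin cylP_ge0.
Qed.

Lemma trajP_lb1 (pol : policy EB) : beta pol = 1 -> (1 <= trajP pol XX)%E.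
Proof.
move=> hb; apply: le_ereal_inf_tmp => y [C hC <-].
have xs : XX (fun _ => ((false, false) : bool * bool)) by move=> t _.
have [k _ hk] := hC _ xs.
apply: le_trans (nneseries_lim_ge k.+1 _); last by move=> i _ _; rewrite lee_fin cylP_ge0.
rewrite big_nat_recr //= -[X in (X <= _)%E]add0e; apply: leeD.
  by apply: sume_ge0 => i _; rewrite lee_fin cylP_ge0.
move: hk; case: (C k) => [[m p]|] //= hk.
rewrite lee_fin /prefP -hk //.
rewrite (eq_bigr (fun _ => 1)); last first.
  move=> i _; rewrite -hk /=; last by rewrite -ltnS.
  exact: hb.
rewrite [X in _ * X](eq_bigr (fun _ => 1)); last first.
  move=> i _; rewrite -hk; last exact: ltnW.
  rewrite -hk //.
by rewrite !prodr_const !expr1n /= /inB /= mulr1 mulr1.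
Qed.


Lemma J_LTL_val (pol : policy EB) : @J_LTL R EB phi pol = if beta pol == 1 then 1 else 0.
Proof.
rewrite /J_LTL; change (fine (trajP pol XX) = if beta pol == 1 then 1 else 0).
case: (eqVneq (beta pol) 1) => hb.
  have -> : trajP pol XX = 1%E.
    apply/le_anti; rewrite trajP_lb1 // andbT.
    by have := trajP_ub pol 0; rewrite hb expr1n.
  by [].
have hb1 : 0 <= beta pol < 1.
  by rewrite beta_ge0 lt_neqAle beta_le1 hb.
have -> : trajP pol XX = 0%E.
  have h0 := trajP_ge0 pol; have hu := trajP_ub pol.
  move: h0 hu; case: (trajP pol XX) => [x| |] //=.
    rewrite lee_fin => x0 hu; congr EFin; apply/le_anti; rewrite x0 andbT.
    rewrite leNgt; apply/negP => xpos.
    have [N HN] := pow_small hb1 xpos.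
    have := hu N; rewrite lee_fin => h.
    have := HN N.+1 (leqnSn N); rewrite ltNge h //.
  by move=> _ /(_ 0%N).
by [].
Qed.


Definition clamp (p : R) : R := if (0 <= p) && (p <= 1) then p else 0.
Lemma clamp01 p : 0 <= clamp p <= 1.
Proof. by rewrite /clamp; case: ifP => //; rewrite lexx ler01. Qed.
Lemma clampE p : 0 <= p <= 1 -> clamp p = p.
Proof. by rewrite /clamp => ->. Qed.
Definition pd (p : R) (s a : bool) : R := if a then clamp p else 1 - clamp p.
Lemma pd_dist p s : is_dist (pd p s).
Proof.
have /andP[h0 h1] := clamp01 p.
split; first by move=> a; rewrite /pd; case: a; lra.
rewrite big_bool /pd /=; ring.
Qed.
Definition polp p : policy EB := exist _ (pd p) (pd_dist p).
Lemma beta_polp p : beta (polp p) = 1 - clamp p.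
Proof. by []. Qed.

Definition xs : traj EB := fun _ => (false, false).

Lemma wbound (pol : policy EB) s a (F : bool * bool -> R) B :
  (forall x, `|F x| <= B) ->
  `|\sum_(x : bool * bool) sval pol x.1 x.2 * trB s a x.1 * F x| <= B.
Proof.
move=> hB; apply: le_trans (ler_norm_sum _ _ _) _.
rewrite -[leRHS]mul1r -(@weight_sum R EB pol s a) mulr_suml.
apply: ler_sum => x _; rewrite normrM ger0_norm; last first.
  by rewrite mulr_ge0 // ?(@pol_ge0 R EB) ?(@tr_ge0 R EB).
apply: ler_wpM2l; last exact: hB.
by rewrite mulr_ge0 // ?(@pol_ge0 R EB) ?(@tr_ge0 R EB).
Qed.

Lemma near_det p n (G : traj EB -> R) B : 0 <= p <= 1 -> dep n G ->
  (forall xi, `|G xi| <= B) ->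
  `|EX (polp p) n G - G xs| <= 2 * B * n.+1%:R * p.
Proof.
move=> hp; have hc := clampE hp.
have key : forall a b : R, `|a| <= B -> `|b| <= B ->
    `|clamp p * a + (1 - clamp p) * b - b| <= 2 * B * p.
  move=> a b ha hb; have -> : clamp p * a + (1 - clamp p) * b - b = clamp p * (a - b) by ring.
  rewrite normrM hc ger0_norm; last by case/andP: hp.
  rewrite mulrC; apply: ler_wpM2r; first by case/andP: hp.
  apply: le_trans (ler_normB _ _) _; lra.
elim: n G B key => [|n IH] G B key dG hB.
  rewrite exq_base sum_bb /= /inB /= /pd /=.
  have -> : xs = (fun _ => (false, false)) by [].
  rewrite mul1r.
  have := key (G (fun _ => (false, true))) (G (fun _ => (false, false))) (hB _) (hB _).
  by rewrite !mul0r !add0r mul1r mulr1.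
rewrite exq_step //.
set H := fun xi : traj EB => _.
have dH : dep n H.
  move=> xi xi' E'; rewrite /H; apply: eq_bigr => x _; rewrite (E' n) //.
  congr (_ * _); apply: dG => i _; rewrite /ext; case: ifP => // hi; exact: E'.
have hH : forall xi, `|H xi| <= B.
  by move=> xi; apply: wbound => x; exact: hB.
have IH' := IH H B key dH hH.
have hHx : `|H xs - G xs| <= 2 * B * p.
  rewrite /H sum_bb /trB /= /pd /=.
  have -> : ext xs n (false, false) = xs.
    by apply/funext => i; rewrite /ext /xs; case: ifP.
  have := key (G (ext xs n (false, true))) (G xs) (hB _) (hB _).
  by rewrite /trB /= ?mulr0n ?mulr1n !mulr0 !mul0r !add0r !mulr1.
have -> : EX (polp p) n H - G xs = (EX (polp p) n H - H xs) + (H xs - G xs) by ring.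
apply: le_trans (ler_normD _ _) _.
have -> : 2 * B * n.+2%:R * p = 2 * B * n.+1%:R * p + 2 * B * p.
  by rewrite [n.+2%:R]mulrSr; ring.
exact: lerD.
Qed.

End EnvB.


Section Main.
Variable R : realType.
Local Notation EB := (EB R).

Lemma fin_bound (K : finType) (F : K -> R) : exists M, 0 < M /\ forall k, `|F k| <= M.
Proof.
exists (1 + \sum_k `|F k|); split.
  by apply: ltr_wpDr; [apply: sumr_ge0 => k _ | exact: ltr01].
move=> k; rewrite (bigD1 k) //=.
have : 0 <= \sum_(i | i != k) `|F i| by apply: sumr_ge0.
lra.
Qed.

Lemma no_cont (r : nat -> traj EB -> R) g M0 :
  0 <= g -> g < 1 -> 0 < M0 ->
  (forall t xi, `|r t xi| <= M0 * g ^+ t) ->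
  (forall t, dep t.+1 (r t)) ->
  ~ (forall p q : policy EB,
       (@J_LAR R EB (@Rw R) q <= @J_LAR R EB (@Rw R) p) <->
       (limn (aa r q) <= limn (aa r p))).
Proof.
move=> g0 g1 M00 hr hdep H.
set J := fun pol => limn (aa r pol).
have L0 : @J_LAR R EB (@Rw R) (polp 0) = 1.
  by rewrite J_LAR_val beta_polp clampE ?lexx ?ler01 // subr0 eqxx.
have Lp : forall p, 0 < p <= 1 -> @J_LAR R EB (@Rw R) (polp p) = 0.
  move=> p /andP[p0 p1]; rewrite J_LAR_val beta_polp clampE ?p1 ?ltW //.
  case: eqP => // h; have : p = 0 by lra.
  by move=> e; move: p0; rewrite e ltxx.
have h1 : J (polp 1) < J (polp 0).
  rewrite ltNge; apply/negP => h.
  have := proj2 (H (polp 1) (polp 0)) h.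
  by rewrite L0 Lp ?ltr01 ?lexx // ler10.
have heq : forall p, 0 < p <= 1 -> J (polp p) = J (polp 1).
  move=> p hp; apply/le_anti; apply/andP; split.
    by apply: (proj1 (H (polp 1) (polp p))); rewrite !Lp ?ltr01 ?lexx.
  by apply: (proj1 (H (polp p) (polp 1))); rewrite !Lp ?ltr01 ?lexx.
set d := J (polp 0) - J (polp 1).
have d0 : 0 < d by rewrite /d subr_gt0.
set C := M0 / (1 - g).
have C0 : 0 < C by rewrite /C divr_gt0 // subr_gt0.
have [N HN] : exists N, M0 * g ^+ N / (1 - g) < d / 4.
  have hg : 0 <= g < 1 by rewrite g0 g1.
  have hp : 0 < d / 4 * (1 - g) / M0.
    apply: divr_gt0 => //; apply: mulr_gt0; last by rewrite subr_gt0.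
    by apply: divr_gt0.
  have [N HN] := pow_small hg hp.
  exists N; have := HN N (leqnn N).
  by rewrite ltr_pdivlMr // ltr_pdivrMr ?subr_gt0 // mulrC.
set p := Num.min 1 (d / (8 * C * N.+1%:R)).
have hN1 : 0 < N.+1%:R :> R by rewrite ltr0n.
have hK : 0 < 8 * C * N.+1%:R by apply: mulr_gt0 => //; apply: mulr_gt0.
have p0 : 0 < p by rewrite /p lt_min ltr01 /= divr_gt0.
have p1 : p <= 1 by rewrite /p ge_min lexx.
have hpd : 2 * C * N.+1%:R * p <= d / 4.
  have : p <= d / (8 * C * N.+1%:R) by rewrite /p ge_min lexx orbT.
  rewrite ler_pdivlMr // => h.
  have -> : 2 * C * N.+1%:R * p = (p * (8 * C * N.+1%:R)) / 4.
    by field.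
  by rewrite ler_pM2r // invr_gt0.
have hp01 : 0 <= p <= 1 by rewrite ltW.
have h001 : 0 <= (0 : R) <= 1 by rewrite lexx ler01.
have A1 := aa_lim g0 g1 M00 hr hdep (polp p) N.
have A2 := aa_lim g0 g1 M00 hr hdep (polp 0) N.
have B1 := @near_det R p N _ _ hp01 (@dep_GG R EB r hdep N) (GG_bound g0 g1 M00 hr N).
have B2 := @near_det R 0 N _ _ h001 (@dep_GG R EB r hdep N) (GG_bound g0 g1 M00 hr N).
rewrite mulr0 in B2.
have E1 : J (polp p) = J (polp 1) by apply: heq; rewrite p0 p1.
have Ed : d = limn (aa r (polp 0)) - limn (aa r (polp 1)) by [].
have E1' : limn (aa r (polp p)) = limn (aa r (polp 1)) := E1.
have B1' : `|aa r (polp p) N - GG r N (xs R)| <= 2 * C * N.+1%:R * p := B1.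
have B2' : `|aa r (polp 0) N - GG r N (xs R)| <= 0 := B2.
have HN' : M0 * g ^+ N / (1 - g) < d / 4 := HN.
move: A1 A2 B1' B2'; rewrite !ler_norml => /andP[a1 a1'] /andP[a2 a2'] /andP[b1 b1'] /andP[b2 b2'].
lra.
Qed.


Lemma rm_dep (U : finType) (u0 : U) (dU : U -> bool -> bool -> bool -> U) (xi xi' : traj EB) t :
  (forall i, (i <= t)%N -> xi i = xi' i) ->
  @rm_state R EB U u0 dU xi t = @rm_state R EB U u0 dU xi' t.
Proof.
elim: t => [|t IH] h //=.
rewrite IH; last by move=> i hi; apply: h; exact: leqW.
by rewrite (h t) ?leqnSn // (h t.+1).
Qed.

End Main.

Unset Implicit Arguments.
Theorem mainTheorem8 (R : realType) :
  exists (E : env R) (ord : policy E -> policy E -> Prop),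
    total_preorder ord /\
    (in_Ord_LAR ord /\ in_Ord_LTL ord) /\
    ~ (in_Ord_RM ord \/ in_Ord_MR ord).
Proof.
exists (EB R), (fun p q => @J_LAR R (EB R) (@Rw R) q <= @J_LAR R (EB R) (@Rw R) p).
split; [split|split; [split|]].
- by move=> p q r h1 h2; exact: le_trans h2 h1.
- by move=> p q; case/orP: (le_total (@J_LAR R (EB R) (@Rw R) q) (@J_LAR R (EB R) (@Rw R) p)) => h; [left|right].
- by exists (@Rw R).
- exists (phi R) => p q; rewrite !J_LTL_val !J_LAR_val; done.
case=> [[U [u0 [dU [dR [g [/andP[g0 g1] hind]]]]]]|[Rw' [g [/andP[g0 g1] hind]]]].
  have [M0 [M00 hM]] := fin_bound (fun k : U * U * bool * bool * bool =>
                           dR k.1.1.1.1 k.1.1.1.2 k.1.1.2 k.1.2 k.2).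
  apply: (@no_cont R (fun t xi => g ^+ t *
      rew (dR (rm_state u0 dU xi t) (rm_state u0 dU xi t.+1)) xi t) g M0 g0 g1 M00).
  - move=> t xi; rewrite normrM ger0_norm ?exprn_ge0 // mulrC ler_wpM2r ?exprn_ge0 //.
    exact: (hM (rm_state u0 dU xi t, rm_state u0 dU xi t.+1, (xi t).1, (xi t).2, (xi t.+1).1)).
  - move=> t xi xi' h; rewrite /rew (h t) ?leqnSn // (h t.+1) //.
    by rewrite (@rm_dep R U u0 dU xi xi' t) 1?(@rm_dep R U u0 dU xi xi' t.+1) // => i hi;
       apply: h; rewrite // ltnW.
  - move=> p q; exact: (hind p q).
have [M0 [M00 hM]] := fin_bound (fun k : bool * bool * bool => Rw' k.1.1 k.1.2 k.2).
apply: (@no_cont R (fun t xi => g ^+ t * rew Rw' xi t) g M0 g0 g1 M00).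
- move=> t xi; rewrite normrM ger0_norm ?exprn_ge0 // mulrC ler_wpM2r ?exprn_ge0 //.
  exact: (hM ((xi t).1, (xi t).2, (xi t.+1).1)).
- by move=> t xi xi' h; rewrite /rew (h t) ?leqnSn // (h t.+1).
- move=> p q; exact: (hind p q).
Qed.
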